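(* Consider the two-parameter model below in the spin-$1/2$ (qubit) representation, $J_k=\sigma_k/2$, with arbitrary pure initial state $|\psi_0\rangle$ with Bloch vector $\mathbf r_0$ ($|\mathbf r_0|=1$). Then $\det\boldsymbol{\mathcal Q}=\det\boldsymbol{\mathcal D}=4t^2\sin^2\tfrac{Bt}{2}\,(\mathbf n_2\cdot\mathbf r_0)^2$. In particular, the Uhlmann matrix vanishes exactly when the QFIM is singular (for $t\sin\frac{Bt}{2}\ne0$), and whenever the QFIM is invertible the asymptotic incompatibility equals $\mathcal R=1$, for all values of $B,\theta,t$ and every pure initial state.
   Context: Fix $t\in\mathbb R$, let $H=B(\cos\theta J_x+\sin\theta J_z)$, $U=e^{-itH}$, $|\psi_{B,\theta}\rangle=U|\psi_0\rangle$. Let $\mathbf n_\theta=(\cos\theta,0,\sin\theta)$, $\mathbf n_1=(\cos\frac{Bt}{2}\sin\theta,-\sin\frac{Bt}{2},-\cos\frac{Bt}{2}\cos\theta)$, $\mathbf n_2=\mathbf n_\theta\times\mathbf n_1$. The Bloch vector is $\mathbf r_0=(\langle\sigma_x\rangle_0,\langle\sigma_y\rangle_0,\langle\sigma_z\rangle_0)$, $\langle X\rangle_0=\langle\psi_0|X|\psi_0\rangle$. With $\mathcal H_l=i(\partial_lU^\dagger)U$, $l\in\{B,\theta\}$, the QFIM is $\mathcal Q_{ll'}=2\langle\{\mathcal H_l,\mathcal H_{l'}\}\rangle_0-4\langle\mathcal H_l\rangle_0\langle\mathcal H_{l'}\rangle_0$, the Uhlmann matrix is $\mathcal D_{ll'}=-2i\langle[\mathcal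 H_l,\mathcal H_{l'}]\rangle_0$, and the AI is $\mathcal R=\max\{|\mu|:\mu\text{ eigenvalue of }\boldsymbol{\mathcal Q}^{-1}\boldsymbol{\mathcal D}\}$ (defined when $\boldsymbol{\mathcal Q}$ is invertible). *)

(* Defs.v *)
From HB Require Import structures.
From mathcomp Require Import all_boot all_order all_algebra.
From mathcomp Require Import complex.
From mathcomp Require Import all_classical all_reals all_analysis.

Set Implicit Arguments.
Unset Strict Implicit.
Unset Printing Implicit Defensive.

Import Order.TTheory GRing.Theory Num.Theory.
Import numFieldNormedType.Exports.
Local Open Scope ring_scope.
Local Open Scope complex_scope.

Section QubitModel.
Variable R : realType.
Local Notation C := R[i].

Definition sigx : 'M[C]_2 := \matrix_(i < 2, j < 2) (if i == j then 0 else 1).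
Definition sigy : 'M[C]_2 :=
  \matrix_(i < 2, j < 2)
    (if i == j then 0 else if (i : nat) == 0%N then - 'i else 'i).
Definition sigz : 'M[C]_2 :=
  \matrix_(i < 2, j < 2)
    (if i == j then (if (i : nat) == 0%N then 1 else -1) else 0).

Definition Jx : 'M[C]_2 := (2^-1 : C) *: sigx.
Definition Jy : 'M[C]_2 := (2^-1 : C) *: sigy.
Definition Jz : 'M[C]_2 := (2^-1 : C) *: sigz.

Definition Ham (B th : R) : 'M[C]_2 :=
  (B%:C) *: ((cos th)%:C *: Jx + (sin th)%:C *: Jz).

Definition expm (A : 'M[C]_2) : 'M[C]_2 :=
  \matrix_(i < 2, j < 2)
    ((limn (fun n : nat => complex.Re ((\sum_(k < n) ((k`!)%:R)^-1 *: A ^+ k) i j)))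
     +i* (limn (fun n : nat => complex.Im ((\sum_(k < n) ((k`!)%:R)^-1 *: A ^+ k) i j)))).

Definition Uop (t B th : R) : 'M[C]_2 := expm ((- ('i * t%:C)) *: Ham B th).

Definition dagger (m n : nat) (M : 'M[C]_(m, n)) : 'M[C]_(n, m) :=
  \matrix_(i < n, j < m) (M j i)^*.

Definition dmx (f : R -> 'M[C]_2) (x : R) : 'M[C]_2 :=
  \matrix_(i < 2, j < 2)
    ((derive1 (fun y => complex.Re (f y i j)) x) +i* (derive1 (fun y => complex.Im (f y i j)) x)).

(* generators H_l = i (d_l U^dagger) U; index l = 0 is B, l = 1 is theta *)
Definition gen (t B th : R) (l : 'I_2) : 'M[C]_2 :=
  'i *: ((if (l : nat) == 0%N
          then dmx (fun b => dagger (Uop t b th)) B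
          else dmx (fun a => dagger (Uop t B a)) th) *m Uop t B th).

Definition expect (psi : 'cV[C]_2) (X : 'M[C]_2) : C :=
  (dagger psi *m X *m psi) 0 0.

Definition QFIM (t B th : R) (psi : 'cV[C]_2) : 'M[C]_2 :=
  \matrix_(l < 2, l' < 2)
    (2 * expect psi (gen t B th l *m gen t B th l' + gen t B th l' *m gen t B th l)
     - 4 * expect psi (gen t B th l) * expect psi (gen t B th l')).

Definition Uhlmann (t B th : R) (psi : 'cV[C]_2) : 'M[C]_2 :=
  \matrix_(l < 2, l' < 2)
    (- 2 * 'i *
       expect psi (gen t B th l *m gen t B th l' - gen t B th l' *m gen t B th l)).

Definition vec3 (a b c : R) : 'rV[R]_3 :=
  \row_(k < 3) (if (k : nat) == 0%N then a else if (k : nat) == 1%N then b else c).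
Definition dot3 (u v : 'rV[R]_3) : R := \sum_(k < 3) u 0 k * v 0 k.
Definition cross3 (u v : 'rV[R]_3) : 'rV[R]_3 :=
  vec3 (u 0 1 * v 0 2 - u 0 2 * v 0 1)
       (u 0 2 * v 0 0 - u 0 0 * v 0 2)
       (u 0 0 * v 0 1 - u 0 1 * v 0 0).

Definition n_theta (th : R) : 'rV[R]_3 := vec3 (cos th) 0 (sin th).
Definition n_1 (t B th : R) : 'rV[R]_3 :=
  vec3 (cos (B * t / 2) * sin th) (- sin (B * t / 2)) (- cos (B * t / 2) * cos th).
Definition n_2 (t B th : R) : 'rV[R]_3 := cross3 (n_theta th) (n_1 t B th).

(* Bloch vector r0 = (<sigma_x>_0, <sigma_y>_0, <sigma_z>_0) (real parts; these
   expectation values are real) *)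
Definition bloch (psi : 'cV[C]_2) : 'rV[R]_3 :=
  vec3 (complex.Re (expect psi sigx)) (complex.Re (expect psi sigy)) (complex.Re (expect psi sigz)).

(* asymptotic incompatibility: R(M) = max { |mu| : mu eigenvalue of M };
   [AI_eq M r] says this maximum equals r *)
Definition AI_eq (M : 'M[C]_2) (r : R) : Prop :=
  (exists mu : C, eigenvalue M mu /\ `|mu| = r%:C) /\
  (forall mu : C, eigenvalue M mu -> `|mu| <= r%:C).

End QubitModel.

(* Main.v *)
Require Import Defs.
From HB Require Import structures.
From mathcomp Require Import all_boot all_order all_algebra.
From mathcomp Require Import complex.
From mathcomp Require Import all_classical all_reals all_analysis.
From mathcomp Require Import ring lra.
Import Order.TTheory GRing.Theory Num.Theory.
Set Implicit Arguments.
Unset Strict Implicit.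
Local Open Scope ring_scope.
Local Open Scope complex_scope.


Module LimCS.
Import numFieldNormedType.Exports.
Local Open Scope classical_set_scope.
Section L.
Variable R : realType.
Lemma lim_cs (x a b : R) :
  limn (fun n => series (cos_coeff x) n * a + series (sin_coeff x) n * b)
  = cos x * a + sin x * b.
Proof.
apply: cvg_lim => //.
have hc : series (cos_coeff x) @ \oo --> cos x.
  by rewrite unlock; exact: is_cvg_series_cos_coeff.
have hs : series (sin_coeff x) @ \oo --> sin x.
  by rewrite unlock; exact: is_cvg_series_sin_coeff.
apply: cvgD; apply: cvgMl; assumption.
Qed.

End L.
End LimCS.

Section S.
Variable R : realType.
Local Notation C := R[i].
Local Notation Re := complex.Re.
Local Notation Im := complex.Im.
Lemma ReM (x y : C) : Re (x * y) = Re x * Re y - Im x * Im y.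
Proof. by case: x => a b; case: y => c d. Qed.
Lemma ImM (x y : C) : Im (x * y) = Re x * Im y + Im x * Re y.
Proof. by case: x => a b; case: y => c d. Qed.
Lemma ReD (x y : C) : Re (x + y) = Re x + Re y.
Proof. by case: x => a b; case: y => c d. Qed.
Lemma ImD (x y : C) : Im (x + y) = Im x + Im y.
Proof. by case: x => a b; case: y => c d. Qed.
Lemma ReN (x : C) : Re (- x) = - Re x.
Proof. by case: x => a b. Qed.
Lemma ImN (x : C) : Im (- x) = - Im x.
Proof. by case: x => a b. Qed.
Ltac cplx := apply/eqP; rewrite eq_complex /= ?(ReM,ImM,ReD,ImD,ReN,ImN) /=;
  apply/andP; split; apply/eqP.

Lemma natC n : (n%:R : C) = (n%:R : R)%:C.
Proof. by rewrite rmorph_nat. Qed.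
Lemma invC (x : R) : (x%:C)^-1 = (x^-1)%:C.
Proof. by rewrite fmorphV. Qed.

Lemma d1 (f : R -> R) (x d : R) : is_derive x 1 f d -> derive1 f x = d.
Proof. by move=> H; rewrite derive1E derive_val. Qed.


Lemma dlin (k x : R) : is_derive x 1 (fun y : R => y * k) k.
Proof. by apply: trigger_derive; rewrite scaler0 add0r /GRing.scale /= mulr1. Qed.

Lemma det2 (A : 'M[C]_2) : \det A = A 0 0 * A 1 1 - A 0 1 * A 1 0.
Proof.
rewrite (expand_det_row _ 0) !big_ord_recl big_ord0 /cofactor !det_mx11 !mxE /=.
try have -> : lift 0 0 = 1 :> 'I_2 by apply/val_inj.
try have -> : lift ord0 0 = 1 :> 'I_2 by apply/val_inj.
try have -> : lift ord0 ord0 = 1 :> 'I_2 by apply/val_inj.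
try have -> : lift (lift ord0 ord0) 0 = 0 :> 'I_2 by apply/val_inj.
try have -> : lift 1 0 = 0 :> 'I_2 by apply/val_inj.
try have -> : (ord0 : 'I_2) = 0 by apply/val_inj.
rewrite /= expr0 expr1 addr0. ring.
Qed.

Definition Nm (th : R) : 'M[C]_2 := \matrix_(i < 2, j < 2)
  (if i == j then (if (i : nat) == 0%N then (sin th)%:C else (- sin th)%:C) else (cos th)%:C).
Definition K (th : R) : 'M[C]_2 := (- 'i) *: Nm th.


Lemma A_eq t B th : (- ('i * t%:C)) *: Ham B th = (B * t / 2)%:C *: K th.
Proof.
apply/matrixP => i j; rewrite !mxE (natC 2) invC.
case: i => [[|[|//]] ?]; case: j => [[|[|//]] ?]; rewrite ?mxE /=; cplx; have := cos2Dsin2 th; nra.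
Qed.

Lemma Kpow2 th : K th ^+ 2 = -1.
Proof.
apply/matrixP => i j; rewrite expr2 !mxE !big_ord_recr big_ord0 /= !mxE.
case: i => [[|[|//]] ?]; case: j => [[|[|//]] ?]; rewrite ?mxE /=; cplx; have := cos2Dsin2 th; nra.
Qed.

Lemma signC m : ((-1)^+m : C) = ((-1)^+m : R)%:C.
Proof. by rewrite rmorphXn rmorphN1. Qed.

Lemma mxsign m : (-1 : 'M[C]_2)^+m = ((-1)^+m : C) *: 1.
Proof.
elim: m => [|m IH]; first by rewrite !expr0 scale1r.
by rewrite !exprS IH !mulN1r scaleNr.
Qed.

Lemma Kpow th k : K th ^+ k =
  if odd k then ((-1)^+(k./2) : C) *: K th else ((-1)^+(k./2) : C) *: 1.
Proof.
have := odd_double_half k; case: (odd k) => /= hk; rewrite -{1}hk.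
  by rewrite add1n exprS -muln2 mulnC exprM Kpow2 mxsign -scalerAr mulr1.
by rewrite add0n -muln2 mulnC exprM Kpow2 mxsign.
Qed.

Lemma term ph th k : ((k`!)%:R)^-1 *: ((ph%:C *: K th)^+k) =
  (cos_coeff ph k)%:C *: 1 + (sin_coeff ph k)%:C *: K th.
Proof.
rewrite exprZn Kpow /cos_coeff /sin_coeff /=.
move: (K th) => KK.
have := odd_double_half k; case: (boolP (odd k)) => ok hk /=.
  have e : k.-1./2 = k./2 by rewrite -{1}hk /= ?add1n /= doubleK.
  rewrite e -exprnP !mul0r rmorph0 scale0r add0r !scalerA natC invC signC -rmorphXn -!rmorphM.
  by congr (_%:C *: _); ring.
rewrite -exprnP !mul0r rmorph0 scale0r addr0 !scalerA natC invC signC -rmorphXn -!rmorphM.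
by congr (_%:C *: _); ring.
Qed.

Lemma sumK ph th n : \sum_(k < n) ((k`!)%:R)^-1 *: (ph%:C *: K th)^+k =
  (series (cos_coeff ph) n)%:C *: 1 + (series (sin_coeff ph) n)%:C *: K th.
Proof.
rewrite (eq_bigr (fun k : 'I_n => (cos_coeff ph k)%:C *: 1 + (sin_coeff ph k)%:C *: K th));
  last by move=> k _; exact: term.
rewrite big_split /= -!scaler_suml -!rmorph_sum.
by rewrite /series /= !big_mkord.
Qed.

Definition Uexp ph th : 'M[C]_2 := (cos ph)%:C *: 1 + (sin ph)%:C *: K th.

Lemma ReMr (x : R) (y : C) : Re (x%:C * y) = x * Re y.
Proof. case: y => a b /=; ring. Qed.
Lemma ImMr (x : R) (y : C) : Im (x%:C * y) = x * Im y.
Proof. case: y => a b /=; ring. Qed.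
Lemma lincE (x y : R) (a b : C) :
  x%:C * a + y%:C * b = (x * Re a + y * Re b) +i* (x * Im a + y * Im b).
Proof. case: a => a1 a2; case: b => b1 b2 /=; apply/eqP; rewrite eq_complex /=; apply/andP; split; apply/eqP; ring. Qed.

Lemma Uop_eq t B th : Uop t B th = Uexp (B * t / 2) th.
Proof.
apply/matrixP => i j; rewrite /Uop /expm A_eq mxE.
rewrite [X in limn X +i* _](_ : _ = fun n => series (cos_coeff (B * t / 2)) n * Re ((1 : 'M[C]_2) i j)
   + series (sin_coeff (B * t / 2)) n * Re (K th i j)); last first.
  by apply/funext => n; rewrite sumK !mxE ReD !ReMr.
rewrite [X in _ +i* limn X](_ : _ = fun n => series (cos_coeff (B * t / 2)) n * Im ((1 : 'M[C]_2) i j)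
   + series (sin_coeff (B * t / 2)) n * Im (K th i j)); last first.
  by apply/funext => n; rewrite sumK !mxE ImD !ImMr.
by rewrite !LimCS.lim_cs /Uexp !mxE lincE.
Qed.
End S.

Ltac cplx := apply/eqP; rewrite eq_complex /= ?(ReM,ImM,ReD,ImD,ReN,ImN) /=;
  apply/andP; split; apply/eqP.

Section S2.
Variable R : realType.
Local Notation C := R[i].
Local Notation Re := complex.Re.
Local Notation Im := complex.Im.


Ltac dfin := rewrite ?scaler0 ?add0r ?addr0 /GRing.scale /= ?mulr1 ?mulrA; ring.

Definition Nr (th : R) (i j : 'I_2) : R :=
  if i == j then (if (i : nat) == 0%N then sin th else - sin th) else cos th.
Definition Nrd (th : R) (i j : 'I_2) : R :=
  if i == j then (if (i : nat) == 0%N then cos th else - cos th) else - sin th.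

Lemma U_ent ph th i j : Uexp ph th i j =
  (if i == j then cos ph else 0) +i* (- sin ph * Nr th i j).
Proof.
rewrite /Uexp /K /Nm /Nr !mxE.
case: i => [[|[|//]] ?]; case: j => [[|[|//]] ?]; rewrite ?mxE /=; cplx; ring.
Qed.

Lemma Ud_ent ph th i j : dagger (Uexp ph th) i j =
  (if i == j then cos ph else 0) +i* (sin ph * Nr th i j).
Proof.
rewrite /dagger mxE U_ent /Nr.
case: i => [[|[|//]] ?]; case: j => [[|[|//]] ?]; rewrite /=; cplx; ring.
Qed.

Lemma dscale (f : R -> R) (c x d : R) :
  is_derive x 1 f d -> is_derive x 1 (fun y => c * f y) (c * d).
Proof. move=> H; exact: (is_deriveZ c H). Qed.

Lemma dcomp (f : R -> R) (k x d : R) :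
  is_derive (x * k) 1 f d -> is_derive x 1 (fun y => f (y * k)) (d * k).
Proof. move=> H. have := @is_derive1_comp R f (fun y => y * k) x d k H (dlin k x). exact. Qed.

Lemma dcst (c x : R) : derive1 (fun _ : R => c) x = 0.
Proof. by apply: d1. Qed.


Definition dUB (t B th : R) : 'M[C]_2 := \matrix_(i < 2, j < 2)
  ((if i == j then - sin (B * t / 2) * (t / 2) else 0) +i* (cos (B * t / 2) * (t / 2) * Nr th i j)).
Definition dUT (t B th : R) : 'M[C]_2 := \matrix_(i < 2, j < 2)
  (0 +i* (sin (B * t / 2) * Nrd th i j)).

Lemma dmxB t B th : dmx (fun b => dagger (Uop t b th)) B = dUB t B th.
Proof.
apply/matrixP => i j; rewrite !mxE.
have eR : (fun y => Re (dagger (Uop t y th) i j)) =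
    fun y => if i == j then cos (y * (t / 2)) else 0.
  by apply/funext => y; rewrite Uop_eq Ud_ent /= mulrA.
have eI : (fun y => Im (dagger (Uop t y th) i j)) =
    fun y => Nr th i j * sin (y * (t / 2)).
  by apply/funext => y; rewrite Uop_eq Ud_ent /= mulrA mulrC.
rewrite eR eI; congr (_ +i* _).
  case: (i == j); last exact: dcst.
  by apply: d1; apply: is_derive_eq; dfin.
by apply: d1; apply: is_derive_eq; dfin.
Qed.

Lemma dmxT t B th : dmx (fun a => dagger (Uop t B a)) th = dUT t B th.
Proof.
apply/matrixP => i j; rewrite !mxE.
have eR : (fun a => Re (dagger (Uop t B a) i j)) =
    fun _ => if i == j then cos (B * t / 2) else 0.
  by apply/funext => y; rewrite Uop_eq Ud_ent.
have eI : (fun a => Im (dagger (Uop t B a) i j)) =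
    fun a => sin (B * t / 2) * Nr a i j.
  by apply/funext => y; rewrite Uop_eq Ud_ent.
rewrite eR eI dcst; clear eR eI; congr (_ +i* _).
rewrite /Nr /Nrd; case: i => [[|[|//]] ?]; case: j => [[|[|//]] ?] /=.
- by apply: d1; apply: dscale; exact: is_derive_sin.
- by apply: d1; apply: dscale; exact: is_derive_cos.
- by apply: d1; apply: dscale; exact: is_derive_cos.
- by apply: d1; apply: is_derive_eq; dfin.
Qed.

End S2.

Section S3.
Variable R : realType.
Local Notation C := R[i].
Local Notation Re := complex.Re.
Local Notation Im := complex.Im.


Ltac pyth hp hs l :=
  let rec go l := match l with
  | (?m :: ?l')%SEQ => move: (congr1 (fun z => m * z) hp) (congr1 (fun z => m * z) hs) => /= ? ?; go l'
  | _ => idtac end in go l; lra.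

Definition pvm (x y z : R) : 'M[C]_2 := \matrix_(i < 2, j < 2)
  (if i == j then (if (i : nat) == 0%N then (z / 2) +i* 0 else (- (z / 2)) +i* 0)
   else (if (i : nat) == 0%N then (x / 2) +i* (- (y / 2)) else (x / 2) +i* (y / 2))).

Lemma Uexp_mx (ph th : R) : Uexp ph th =
  \matrix_(i < 2, j < 2) ((if i == j then cos ph else 0) +i* (- sin ph * Nr th i j)).
Proof. by apply/matrixP => i j; rewrite U_ent mxE. Qed.

Lemma gen0 (t B th : R) : gen t B th 0 = pvm (- (t * cos th)) 0 (- (t * sin th)).
Proof.
rewrite /gen /= dmxB Uop_eq Uexp_mx /dUB /pvm /Nr.
apply/matrixP => i j; rewrite !mxE !big_ord_recr big_ord0 /= !mxE.
case: i => [[|[|//]] ?]; case: j => [[|[|//]] ?]; rewrite /=; cplx.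
all: have hp := cos2Dsin2 (B * t / 2); have hs := cos2Dsin2 th;
  move: (cos (B * t / 2)) (sin (B * t / 2)) (cos th) (sin th) hp hs => cp sp c s hp hs;
  pyth hp hs [:: t * s; t * c; t * sp * cp; sp * cp; sp * sp; sp * cp * s; sp * cp * c; sp * sp * s; sp * sp * c].
Qed.

Lemma gen1 (t B th : R) : gen t B th 1 =
  pvm (2 * sin (B * t / 2) * cos (B * t / 2) * sin th)
      (- (2 * sin (B * t / 2) * sin (B * t / 2)))
      (- (2 * sin (B * t / 2) * cos (B * t / 2) * cos th)).
Proof.
rewrite /gen /= dmxT Uop_eq Uexp_mx /dUT /pvm /Nr /Nrd.
apply/matrixP => i j; rewrite !mxE !big_ord_recr big_ord0 /= !mxE.
case: i => [[|[|//]] ?]; case: j => [[|[|//]] ?]; rewrite /=; cplx.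
all: have hp := cos2Dsin2 (B * t / 2); have hs := cos2Dsin2 th;
  move: (cos (B * t / 2)) (sin (B * t / 2)) (cos th) (sin th) hp hs => cp sp c s hp hs;
  pyth hp hs [:: t * s; t * c; t * sp * cp; sp * cp; sp * sp; sp * cp * s; sp * cp * c; sp * sp * s; sp * sp * c].
Qed.
End S3.

Section S4.
Variable R : realType.
Local Notation C := R[i].
Local Notation Re := complex.Re.
Local Notation Im := complex.Im.


Definition cv (p q : C) : 'cV[C]_2 := \col_(i < 2) (if (i : nat) == 0%N then p else q).

Lemma psi_cv (psi : 'cV[C]_2) : psi = cv (psi 0 0) (psi 1 0).
Proof.
apply/matrixP => i j; rewrite !mxE.
case: i => [[|[|//]] ?]; case: j => [[|//] ?] /=; congr (psi _ _); exact/val_inj.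
Qed.

Definition rx (p q : C) : R := 2 * (Re p * Re q + Im p * Im q).
Definition ry (p q : C) : R := 2 * (Re p * Im q - Im p * Re q).
Definition rz (p q : C) : R := Re p ^+ 2 + Im p ^+ 2 - Re q ^+ 2 - Im q ^+ 2.
Definition nrm (p q : C) : R := Re p ^+ 2 + Im p ^+ 2 + Re q ^+ 2 + Im q ^+ 2.

Lemma nrm_cv p q : (dagger (cv p q) *m cv p q) 0 0 = (nrm p q)%:C.
Proof.
case: p => p1 p2; case: q => q1 q2.
rewrite /dagger /nrm ?(mxE, big_ord_recr, big_ord0) /=; cplx; ring.
Qed.

Lemma bloch_cv p q : bloch (cv p q) = vec3 (rx p q) (ry p q) (rz p q).
Proof.
case: p => p1 p2; case: q => q1 q2.
rewrite /bloch /expect /dagger /rx /ry /rz.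
apply/matrixP => i j; rewrite !mxE /=.
case: j => [[|[|[|//]]] ?] /=; rewrite ?(mxE, big_ord_recr, big_ord0) /= ?(ReM,ImM,ReD,ImD,ReN,ImN) /=; ring.
Qed.

Lemma expect_pvm p q x y z : expect (cv p q) (pvm x y z) =
  ((x * rx p q + y * ry p q + z * rz p q) / 2)%:C.
Proof.
case: p => p1 p2; case: q => q1 q2.
rewrite /expect /dagger /rx /ry /rz /pvm.
rewrite ?(mxE, big_ord_recr, big_ord0) /=; cplx; ring.
Qed.

Lemma expect_pvm2 p q x y z x' y' z' : expect (cv p q) (pvm x y z *m pvm x' y' z') =
  ((x * x' + y * y' + z * z') * nrm p q / 4) +i*
  (((y * z' - z * y') * rx p q + (z * x' - x * z') * ry p q + (x * y' - y * x') * rz p q) / 4).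
Proof.
case: p => p1 p2; case: q => q1 q2.
rewrite /expect /dagger /rx /ry /rz /nrm /pvm.
by rewrite ?(mxE, big_ord_recr, big_ord0) /=; cplx; field.
Qed.


Lemma expectD (psi : 'cV[C]_2) (X Y : 'M[C]_2) : expect psi (X + Y) = expect psi X + expect psi Y.
Proof. by rewrite /expect mulmxDr mulmxDl mxE. Qed.
Lemma expectB (psi : 'cV[C]_2) (X Y : 'M[C]_2) : expect psi (X - Y) = expect psi X - expect psi Y.
Proof.
have h : forall (A B : 'M[C]_(1, 1)), (A - B) 0 0 = A 0 0 - B 0 0 by move=> A B; rewrite !mxE.
by rewrite /expect mulmxBr mulmxBl h.
Qed.

End S4.

Section S5.
Variable R : realType.
Local Notation C := R[i].
Local Notation Re := complex.Re.
Local Notation Im := complex.Im.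


Variables (x y z x' y' z' : R).
Definition Gf (l : 'I_2) : 'M[C]_2 := if (l : nat) == 0%N then pvm x y z else pvm x' y' z'.
Definition QG (psi : 'cV[C]_2) : 'M[C]_2 := \matrix_(l < 2, l' < 2)
    (2 * expect psi (Gf l *m Gf l' + Gf l' *m Gf l)
     - 4 * expect psi (Gf l) * expect psi (Gf l')).
Definition UG (psi : 'cV[C]_2) : 'M[C]_2 := \matrix_(l < 2, l' < 2)
    (- 2 * 'i * expect psi (Gf l *m Gf l' - Gf l' *m Gf l)).

Definition Xg (p q : C) : R :=
  (y * z' - z * y') * rx p q + (z * x' - x * z') * ry p q + (x * y' - y * x') * rz p q.

Lemma gram (a1 a2 a3 b1 b2 b3 r1 r2 r3 : R) : r1 ^+ 2 + r2 ^+ 2 + r3 ^+ 2 = 1 ->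
  ((a1 * a1 + a2 * a2 + a3 * a3) - (a1 * r1 + a2 * r2 + a3 * r3) ^+ 2) *
  ((b1 * b1 + b2 * b2 + b3 * b3) - (b1 * r1 + b2 * r2 + b3 * r3) ^+ 2) -
  ((a1 * b1 + a2 * b2 + a3 * b3) - (a1 * r1 + a2 * r2 + a3 * r3) * (b1 * r1 + b2 * r2 + b3 * r3)) ^+ 2
  = ((a2 * b3 - a3 * b2) * r1 + (a3 * b1 - a1 * b3) * r2 + (a1 * b2 - a2 * b1) * r3) ^+ 2.
Proof.
move=> hr.
have key :
  ((a1 * a1 + a2 * a2 + a3 * a3) * (r1 ^+ 2 + r2 ^+ 2 + r3 ^+ 2) - (a1 * r1 + a2 * r2 + a3 * r3) ^+ 2) *
  ((b1 * b1 + b2 * b2 + b3 * b3) * (r1 ^+ 2 + r2 ^+ 2 + r3 ^+ 2) - (b1 * r1 + b2 * r2 + b3 * r3) ^+ 2) -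
  ((a1 * b1 + a2 * b2 + a3 * b3) * (r1 ^+ 2 + r2 ^+ 2 + r3 ^+ 2) - (a1 * r1 + a2 * r2 + a3 * r3) * (b1 * r1 + b2 * r2 + b3 * r3)) ^+ 2
  = (r1 ^+ 2 + r2 ^+ 2 + r3 ^+ 2) * ((a2 * b3 - a3 * b2) * r1 + (a3 * b1 - a1 * b3) * r2 + (a1 * b2 - a2 * b1) * r3) ^+ 2.
  ring.
by rewrite hr !mulr1 mul1r in key.
Qed.

Lemma r_unit (p q : C) : nrm p q = 1 -> rx p q ^+ 2 + ry p q ^+ 2 + rz p q ^+ 2 = 1.
Proof.
move=> hn; rewrite -[RHS](expr1n _ 2) -hn /rx /ry /rz /nrm; ring.
Qed.

Lemma detQG (p q : C) : nrm p q = 1 -> \det (QG (cv p q)) = (Xg p q ^+ 2)%:C.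
Proof.
move=> hn; have G := gram x y z x' y' z' (r_unit hn).
rewrite det2 /QG !mxE /Gf /= !expectD !expect_pvm2 !expect_pvm hn /Xg.
rewrite (@natC R 2) (@natC R 4).
cplx; last by field.
by rewrite -G; field.
Qed.


Lemma UG_mx (p q : C) : UG (cv p q) = \matrix_(i < 2, j < 2)
  (if i == j then 0 else if (i : nat) == 0%N then (Xg p q)%:C else (- Xg p q)%:C).
Proof.
apply/matrixP => i j; rewrite /UG !mxE /Gf /Xg.
case: i => [[|[|//]] ?]; case: j => [[|[|//]] ?];
  rewrite /= !expectB !expect_pvm2 (@natC R 2); by cplx; field.
Qed.

Lemma detUG (p q : C) : \det (UG (cv p q)) = (Xg p q ^+ 2)%:C.
Proof. by rewrite UG_mx det2 !mxE /=; cplx; ring. Qed.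

Lemma UG0 (p q : C) : UG (cv p q) = 0 <-> Xg p q = 0.
Proof.
split.
  by move/(congr1 (fun M : 'M[C]_2 => complex.Re (M 0 1))); rewrite UG_mx !mxE.
move=> h; rewrite UG_mx h; apply/matrixP => i j; rewrite !mxE.
by case: (i == j) => //; case: ((i : nat) == 0%N) => //; rewrite oppr0.
Qed.

Definition qM (q0 q1 q2 : R) : 'M[C]_2 := \matrix_(i < 2, j < 2)
  (if i == j then (if (i : nat) == 0%N then q0 else q2) else q1)%:C.
Definition dM (X : R) : 'M[C]_2 := \matrix_(i < 2, j < 2)
  (if i == j then 0 else if (i : nat) == 0%N then X%:C else (- X)%:C).

Lemma eig_generic (q0 q1 q2 X : R) (a : C) : q0 * q2 - q1 ^+ 2 = X ^+ 2 ->
  \det (a *: qM q0 q1 q2 - dM X) = (X ^+ 2)%:C * (a * a + 1).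
Proof.
move=> h; case: a => a1 a2; rewrite det2 !mxE /=; cplx; last by rewrite -h; ring.
transitivity ((a1 * a1 - a2 * a2) * (q0 * q2 - q1 ^+ 2) + X ^+ 2); first ring.
rewrite -h; ring.
Qed.

Lemma QG_mx (p q : C) : nrm p q = 1 -> QG (cv p q) =
  qM ((x * x + y * y + z * z) - (x * rx p q + y * ry p q + z * rz p q) ^+ 2)
     ((x * x' + y * y' + z * z') - (x * rx p q + y * ry p q + z * rz p q) * (x' * rx p q + y' * ry p q + z' * rz p q))
     ((x' * x' + y' * y' + z' * z') - (x' * rx p q + y' * ry p q + z' * rz p q) ^+ 2).
Proof.
move=> hn; apply/matrixP => i j; rewrite /QG /qM !mxE /Gf.
case: i => [[|[|//]] ?]; case: j => [[|[|//]] ?];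
  rewrite /= !expectD !expect_pvm2 !expect_pvm hn (@natC R 2) (@natC R 4); by cplx; field.
Qed.

Lemma eigQU (p q a : C) : nrm p q = 1 ->
  \det (a *: QG (cv p q) - UG (cv p q)) = (Xg p q ^+ 2)%:C * (a * a + 1).
Proof.
move=> hn; rewrite QG_mx // UG_mx -/(dM (Xg p q)).
apply: eig_generic; exact: (gram x y z x' y' z' (r_unit hn)).
Qed.


Lemma eig_det (M : 'M[R[i]]_2) a : eigenvalue M a = (\det (a%:M - M) == 0).
Proof.
apply/eigenvalueP/det0P=> [[v Av_av v_nz] | [v v_nz Av_av]]; exists v => //.
  by rewrite mulmxBr Av_av mul_mx_scalar subrr.
by apply/eqP; rewrite -mul_mx_scalar eq_sym -subr_eq0 -mulmxBr Av_av.
Qed.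

Lemma norm_sqrN1 (mu : R[i]) : mu ^+ 2 = -1 -> `|mu| = 1.
Proof.
move=> h2.
have : `|mu| ^+ 2 = 1 by rewrite -normrX h2 normrN normr1.
move/eqP; rewrite sqrf_eq1 => /orP [/eqP -> // | /eqP h].
by have := normr_ge0 mu; rewrite h oppr_ge0 ler10.
Qed.

End S5.

Section S6.
Variable R : realType.
Local Notation C := R[i].


Lemma isq : ('i : C) * 'i = -1.
Proof. by cplx; ring. Qed.

Variables (t B th : R).
Local Notation sp := (sin (B * t / 2)).
Local Notation cp := (cos (B * t / 2)).

Lemma genE : gen t B th = Gf (- (t * cos th)) 0 (- (t * sin th))
   (2 * sp * cp * sin th) (- (2 * sp * sp)) (- (2 * sp * cp * cos th)).
Proof.
apply/funext => l; case: l => [[|[|//]] hl]; rewrite /Gf /=.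
  by rewrite -(gen0 t B th); congr (gen _ _ _ _); exact/val_inj.
by rewrite -(gen1 t B th); congr (gen _ _ _ _); exact/val_inj.
Qed.

Lemma QFIM_QG psi : QFIM t B th psi = QG (- (t * cos th)) 0 (- (t * sin th))
   (2 * sp * cp * sin th) (- (2 * sp * sp)) (- (2 * sp * cp * cos th)) psi.
Proof. by rewrite /QFIM /QG genE. Qed.

Lemma Uh_UG psi : Uhlmann t B th psi = UG (- (t * cos th)) 0 (- (t * sin th))
   (2 * sp * cp * sin th) (- (2 * sp * sp)) (- (2 * sp * cp * cos th)) psi.
Proof. by rewrite /Uhlmann /UG genE. Qed.

Lemma Xrhs (p q : C) : Xg (- (t * cos th)) 0 (- (t * sin th))
   (2 * sp * cp * sin th) (- (2 * sp * sp)) (- (2 * sp * cp * cos th)) p q ^+ 2 =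
  4 * t ^+ 2 * sp ^+ 2 * dot3 (n_2 t B th) (bloch (cv p q)) ^+ 2.
Proof.
rewrite bloch_cv /dot3 /n_2 /cross3 /n_theta /n_1 /vec3 /Xg.
rewrite ?(mxE, big_ord_recr, big_ord0) /=; ring.
Qed.

End S6.

Import numFieldNormedType.Exports.

Theorem mainTheorem4 (R : realType) (t B th : R) (psi0 : 'cV[R[i]]_2)
  (hpure : (dagger psi0 *m psi0) 0 0 = 1) :
  let Q := QFIM t B th psi0 in
  let D := Uhlmann t B th psi0 in
  let rhs : R := 4 * t ^+ 2 * sin (B * t / 2) ^+ 2
                 * dot3 (n_2 t B th) (bloch psi0) ^+ 2 in
  [/\ \det Q = rhs%:C,
      \det D = rhs%:C,
      t * sin (B * t / 2) != 0 -> (D = 0 <-> \det Q = 0)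
    & Q \in unitmx -> AI_eq (invmx Q *m D) 1].
Proof.
move=> Q D rhs; rewrite {}/Q {}/D {}/rhs QFIM_QG Uh_UG.
rewrite (psi_cv psi0) in hpure *.
move: hpure; move: (psi0 0 0) (psi0 1 0) => p q.
rewrite nrm_cv => /(congr1 (@complex.Re R)) /= hn.
rewrite -Xrhs.
split.
- by rewrite detQG.
- by rewrite detUG.
- move=> _; rewrite UG0 detQG //; split=> [->|]; first by rewrite expr0n.
  by move/(congr1 (@complex.Re R)) => /= /eqP; rewrite sqrf_eq0 => /eqP.
move=> hU.
set QQ := QG _ _ _ _ _ _ _; set DD := UG _ _ _ _ _ _ _.
have hX : (Xg (- (t * cos th)) 0 (- (t * sin th))
   (2 * sin (B * t / 2) * cos (B * t / 2) * sin th) (- (2 * sin (B * t / 2) * sin (B * t / 2)))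
   (- (2 * sin (B * t / 2) * cos (B * t / 2) * cos th)) p q ^+ 2)%:C != 0.
  by move: hU; rewrite unitmxE /QQ detQG // unitfE.
have eig : forall mu, eigenvalue (invmx QQ *m DD) mu = (mu * mu + 1 == 0).
  move=> mu; rewrite eig_det.
  have -> : mu%:M - invmx QQ *m DD = invmx QQ *m (mu *: QQ - DD).
    by rewrite mulmxBr -scalemxAr mulVmx // scalemx1.
  rewrite det_mulmx det_inv /QQ /DD eigQU // !mulf_eq0 invr_eq0 -/QQ.
  move: hU; rewrite unitmxE unitfE => /negbTE ->.
  by rewrite (negbTE hX).
split.
  exists 'i; split; first by rewrite eig isq addNr.
  by rewrite (@norm_sqrN1 R 'i) ?rmorph1 // expr2 isq.
move=> mu; rewrite eig addr_eq0 => /eqP h.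
by rewrite (@norm_sqrN1 R mu) ?rmorph1 // expr2 h.
Qed.
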